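(* Consider the finite-dimensional problem (P) described in the context. (1) If additionally $\mathbf{x}^\downarrow=0$ is imposed, then (P) reduces to a mixed-integer linear program: all its constraints become mixed-integer linear. (2) Problem (P) reduces to a linear program, in which the constraints can be equivalently expressed as linear constraints in continuous variables only, in each of the following cases: $\mathbf{x}^0\le0$ is additionally imposed; or $K=1$; or $\eta^{c}=\eta^{d}=1$.
   Context: Let $K$ be a positive integer, $\Delta t>0$, $T=K\Delta t$, $\mathcal{K}=\{1,\dots,K\}$, $0\le\underline y\le\bar y$, $\underline x\le0\le\bar x$, efficiencies $\eta^{c},\eta^{d}\in(0,1]$, $\Delta\eta=1/\eta^{d}-\eta^{c}$, $y_0\ge0$ and $\gamma\in[0,T]$. Let $c$ and $\phi$ be real-valued cost functions. Problem (P) minimizes $c(\mathbf{x}^0,\mathbf{x}^\uparrow,\mathbf{x}^\downarrow)+\phi(\mathbf{x}^0,\mathbf{x}^\uparrow,\mathbf{x}^\downarrow,y_0)$. Its variables are $\mathbf{x}^0\in\mathbb{R}^K$; $\mathbf{x}^\uparrow,\mathbf{x}^\downarrow\in\mathbb{R}^K_+$; $\boldsymbol\alpha,\boldsymbol\beta\in\mathbb{R}^K$; $\underline{\boldsymbol\lambda},\bar{\boldsymbol\lambda}\in\mathbb{R}^K_+$; $\underline{\boldsymbol\Lambda}_k\in\mathbb{R}^k_+$ and $\bar{\boldsymbol\Lambda}_k\in\mathbb{R}^k$ for $k\in\mathcal{K}$; and $\upsilon_{1k},\upsilon_{2k}\in\{0,1\}$ for $k\le K-1$. Its constraints are: (a)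 $x^0_k+x^\uparrow_k\le\bar x$ and $x^0_k-x^\downarrow_k\ge\underline x$; (b) $y_0-\gamma\underline\lambda_k-\Delta t\sum_{l\le k}(\alpha_l+\underline\Lambda_{kl})\ge\underline y$; (c) $\alpha_k\ge\eta^{c}x^0_k$, $\alpha_k\ge x^0_k/\eta^{d}$, $\beta_k\ge\eta^{c}(x^0_k+x^\uparrow_k)$ and $\beta_k\ge(x^0_k+x^\uparrow_k)/\eta^{d}$; (d) $\underline\Lambda_{kl}+\underline\lambda_k+\alpha_l-\beta_l\ge0$ for $l\le k$; (e) $y_0+\gamma\bar\lambda_k+\Delta t\sum_{l\le k}\bar\Lambda_{kl}\le\bar y$; (f) $\bar\Lambda_{kk}\ge-\eta^{c}x^0_k$, $\bar\Lambda_{kk}\ge\eta^{c}(x^\downarrow_k-x^0_k)-\bar\lambda_k$ and $\bar\Lambda_{kk}\ge0$; (g) for $k\le K-1$: $(1-\upsilon_{1k})\underline x\le x^0_k-x^\downarrow_k\le\upsilon_{1k}\bar x$ and $\upsilon_{2k}\underline x\le x^0_k\le(1-\upsilon_{2k})\bar x$; (h) for $l<k$: - $\bar\Lambda_{kl}\ge\frac{x^\downarrow_l-x^0_l}{\eta^{d}}-\bar\lambda_k+(1-\upsilon_{1l})\Delta\eta\,\underline x$, - $\bar\Lambda_{kl}\ge-\frac{x^0_l}{\eta^{d}}+\upsilon_{2l}\Delta\eta\,\underline x$, - $\bar\Lambda_{kl}\ge\eta^{c}(x^\downarrow_l-x^0_l)-\bar\lambda_k-\upsilon_{1l}\Delta\eta\,\bar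 x$, - $\bar\Lambda_{kl}\ge-\eta^{c}x^0_l-(1-\upsilon_{2l})\Delta\eta\,\bar x$; (i) for $l<k$: the bilinear constraint $\bar\Lambda_{kl}x^\downarrow_l+\bar\lambda_kx^0_l\ge\upsilon_{2l}\frac{\underline x(\bar x-\underline x)}{\eta^{d}}-\upsilon_{1l}\frac{\bar x^2}{4\eta^{d}}$. All unqualified indices range over $\mathcal{K}$. *)

(* Defs.v *)
From HB Require Import structures.
From mathcomp Require Import all_boot all_order all_algebra.
From mathcomp Require Import reals.
Set Implicit Arguments. Unset Strict Implicit. Unset Printing Implicit Defensive.
Import Order.TTheory GRing.Theory Num.Theory.
Local Open Scope ring_scope.

(* Indices k in {1..K} are represented 0-based by k : 'I_K.
   For k : 'I_K the vectors Lambda_k in R^k are represented as the row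
   (fun l => Lam k l) restricted to l <= k (entries l > k are unused).
   The binaries upsilon_{1k}, upsilon_{2k} (k <= K-1, i.e. 0-based k.+1 < K)
   are booleans u1 k, u2 k, used as reals via (u%:R). *)

Section P.
Variable R : realType.

Definition deta (etac etad : R) : R := etad^-1 - etac.

Definition feasP (K : nat) (dt ylo yhi xlo xhi etac etad y0 gamma : R)
  (x0 xu xd alpha beta laml lamu : 'I_K -> R)
  (Laml Lamu : 'I_K -> 'I_K -> R) (u1 u2 : 'I_K -> bool) : Prop :=
  let de := deta etac etad in
  (forall k, 0 <= xu k /\ 0 <= xd k /\ 0 <= laml k /\ 0 <= lamu k) /\
  (forall k l : 'I_K, (l <= k)%N -> 0 <= Laml k l) /\
  (forall k, x0 k + xu k <= xhi /\ xlo <= x0 k - xd k) /\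
  (forall k : 'I_K,
     ylo <= y0 - gamma * laml k
             - dt * \sum_(l < K | (l <= k)%N) (alpha l + Laml k l)) /\
  (forall k, etac * x0 k <= alpha k /\ x0 k / etad <= alpha k /\
             etac * (x0 k + xu k) <= beta k /\
             (x0 k + xu k) / etad <= beta k) /\
  (forall k l : 'I_K, (l <= k)%N -> 0 <= Laml k l + laml k + alpha l - beta l) /\
  (forall k : 'I_K,
     y0 + gamma * lamu k + dt * \sum_(l < K | (l <= k)%N) Lamu k l <= yhi) /\
  (forall k, - (etac * x0 k) <= Lamu k k /\
             etac * (xd k - x0 k) - lamu k <= Lamu k k /\ 0 <= Lamu k k) /\
  (forall k : 'I_K, (k.+1 < K)%N ->
     (1 - (u1 k)%:R) * xlo <= x0 k - xd k /\ x0 k - xd k <= (u1 k)%:R * xhi /\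
     (u2 k)%:R * xlo <= x0 k /\ x0 k <= (1 - (u2 k)%:R) * xhi) /\
  (forall k l : 'I_K, (l < k)%N ->
     (xd l - x0 l) / etad - lamu k + (1 - (u1 l)%:R) * de * xlo <= Lamu k l /\
     - (x0 l / etad) + (u2 l)%:R * de * xlo <= Lamu k l /\
     etac * (xd l - x0 l) - lamu k - (u1 l)%:R * de * xhi <= Lamu k l /\
     - (etac * x0 l) - (1 - (u2 l)%:R) * de * xhi <= Lamu k l) /\
  (forall k l : 'I_K, (l < k)%N ->
     (u2 l)%:R * (xlo * (xhi - xlo) / etad) - (u1 l)%:R * (xhi ^+ 2 / (4 * etad))
       <= Lamu k l * xd l + lamu k * x0 l).

(* Projection of the feasible set of (P), with an additional constraint
   [extra] on (x0, xup, xdown), onto the decision variables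
   v = (x0, xup, xdown) in R^(3K) (the objective c + phi only depends on
   these and on the fixed datum y0). *)
Definition Pset (K : nat) (dt ylo yhi xlo xhi etac etad y0 gamma : R)
  (extra : ('I_K -> R) -> ('I_K -> R) -> ('I_K -> R) -> Prop)
  (v : 'rV[R]_(K + K + K)) : Prop :=
  exists x0 xu xd : 'I_K -> R,
    v = row_mx (row_mx (\row_k x0 k) (\row_k xu k)) (\row_k xd k) /\
    extra x0 xu xd /\
    exists (alpha beta laml lamu : 'I_K -> R) (Laml Lamu : 'I_K -> 'I_K -> R)
           (u1 u2 : 'I_K -> bool),
      feasP dt ylo yhi xlo xhi etac etad y0 gamma x0 xu xd alpha beta laml lamu
            Laml Lamu u1 u2.

Definition MILP_repr (n : nat) (S : 'rV[R]_n -> Prop) : Prop :=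
  exists (p q m : nat) (A : 'M[R]_(m, n)) (B : 'M[R]_(m, p)) (C : 'M[R]_(m, q))
         (b : 'cV[R]_m),
    forall v, S v <->
      exists (z : 'rV[R]_p) (w : 'rV[R]_q),
        (forall j, w 0 j = 0 \/ w 0 j = 1) /\
        forall i, (A *m v^T + B *m z^T + C *m w^T) i 0 <= b i 0.

Definition LP_repr (n : nat) (S : 'rV[R]_n -> Prop) : Prop :=
  exists (p m : nat) (A : 'M[R]_(m, n)) (B : 'M[R]_(m, p)) (b : 'cV[R]_m),
    forall v, S v <->
      exists z : 'rV[R]_p, forall i, (A *m v^T + B *m z^T) i 0 <= b i 0.

End P.

(* Main.v *)
Require Import Defs.
From HB Require Import structures.
From mathcomp Require Import all_boot all_order all_algebra.
From mathcomp Require Import reals.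
From mathcomp Require Import ring lra.
From Stdlib Require Import FunctionalExtensionality.
Set Implicit Arguments. Unset Strict Implicit. Unset Printing Implicit Defensive.
Import Order.TTheory GRing.Theory Num.Theory.
Local Open Scope ring_scope.

Section Gen.
Variable R : realType.

Section Aff.
Variable X : finType.

Definition aff (h : (X -> R) -> R) := forall a (e1 e2 : X -> R),
  h (fun x => a * e1 x + e2 x) = a * h e1 + h e2 - a * h (fun _ => 0).

Lemma aff_cst c : aff (fun _ => c).
Proof. by move=> a e1 e2; ring. Qed.
Lemma aff_var x : aff (fun e => e x).
Proof. by move=> a e1 e2; ring. Qed.
Lemma aff_add f g : aff f -> aff g -> aff (fun e => f e + g e).
Proof. by move=> hf hg a e1 e2; rewrite hf hg; ring. Qed.
Lemma aff_opp f : aff f -> aff (fun e => - f e).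
Proof. by move=> hf a e1 e2; rewrite hf; ring. Qed.
Lemma aff_mull c f : aff f -> aff (fun e => c * f e).
Proof. by move=> hf a e1 e2; rewrite hf; ring. Qed.
Lemma aff_mulr c f : aff f -> aff (fun e => f e * c).
Proof. by move=> hf a e1 e2; rewrite hf; ring. Qed.
Lemma aff_sum n (P : pred 'I_n) (F : 'I_n -> (X -> R) -> R) :
  (forall i, aff (F i)) -> aff (fun e => \sum_(i < n | P i) F i e).
Proof.
move=> hF a e1 e2.
rewrite (eq_bigr (fun i => a * F i e1 + F i e2 - a * F i (fun _ => 0))); last by move=> i _; rewrite hF.
by rewrite sumrB big_split /= -!mulr_sumr.
Qed.

Lemma aff_expand h : aff h -> forall e,
  h e = h (fun _ => 0) + \sum_x e x * (h (fun y => (x == y)%:R) - h (fun _ => 0)).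
Proof.
move=> hh e.
have key : forall s : seq X,
  h (fun y => \sum_(x <- s) e x * (x == y)%:R) - h (fun _ => 0)
  = \sum_(x <- s) e x * (h (fun y => (x == y)%:R) - h (fun _ => 0)).
  elim=> [|x s IH].
    have -> : (fun y : X => \sum_(x <- [::]) e x * (x == y)%:R) = (fun _ => 0).
      by apply: functional_extensionality => y; rewrite big_nil.
    by rewrite big_nil subrr.
  have -> : (fun y : X => \sum_(x0 <- x :: s) e x0 * (x0 == y)%:R) =
     (fun y => e x * (x == y)%:R + \sum_(x0 <- s) e x0 * (x0 == y)%:R).
    by apply: functional_extensionality => y; rewrite big_cons.
  rewrite hh big_cons -IH; ring.
have := key (index_enum X).
have -> : (fun y : X => \sum_(x <- index_enum X) e x * (x == y)%:R) = e.
  apply: functional_extensionality => y.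
  rewrite (bigD1 y) //= eqxx mulr1 big1 ?addr0 // => x /negbTE ->.
  by rewrite mulr0.
move=> <-; ring.
Qed.

Definition polyh (Q : (X -> R) -> Prop) := exists m (h : 'I_m -> (X -> R) -> R),
  (forall i, aff (h i)) /\ forall e, Q e <-> forall i, h i e <= 0.

Lemma polyh_ext P Q : (forall e, P e <-> Q e) -> polyh P -> polyh Q.
Proof.
move=> PQ [m [h [ha hh]]]; exists m, h; split=> // e; rewrite -PQ; exact: hh.
Qed.

Lemma polyh_true : polyh (fun _ => True).
Proof.
exists 0%N, (fun _ _ => 0); split=> [i|e]; first exact: aff_cst.
by split=> // _ [].
Qed.

Lemma polyh_le f g : aff f -> aff g -> polyh (fun e => f e <= g e).
Proof.
move=> hf hg; exists 1%N, (fun _ e => f e - g e); split=> [i|e].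
  by apply: aff_add => //; apply: aff_opp.
split=> [H i|H]; first by rewrite subr_le0.
by rewrite -subr_le0; apply: (H ord0).
Qed.

Lemma polyh_and P Q : polyh P -> polyh Q -> polyh (fun e => P e /\ Q e).
Proof.
move=> [m1 [h1 [ha1 hh1]]] [m2 [h2 [ha2 hh2]]].
exists (m1 + m2)%N, (fun i => match split i with inl a => h1 a | inr b => h2 b end).
split=> [i|e]; first by case: (split i).
rewrite hh1 hh2; split=> [[H1 H2] i|H]; first by case: (split i).
split=> i.
  by have := H (lshift m2 i); rewrite (unsplitK (inl i)).
by have := H (rshift m1 i); rewrite (unsplitK (inr i)).
Qed.

Lemma polyh_imp (b : bool) Q : polyh Q -> polyh (fun e => b -> Q e).
Proof.
case: b => hq.
  by apply: polyh_ext hq => e; split=> // H; apply: H.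
by apply: polyh_ext polyh_true => e; split.
Qed.

Lemma polyh_forall n (Q : 'I_n -> (X -> R) -> Prop) :
  (forall k, polyh (Q k)) -> polyh (fun e => forall k, Q k e).
Proof.
elim: n Q => [|n IH] Q hQ.
  by apply: polyh_ext polyh_true => e; split=> // _ [].
have := polyh_and (hQ ord0) (IH (fun k => Q (lift ord0 k)) (fun k => hQ _)).
apply: polyh_ext => e; split=> [[H1 H2] k|H]; last by split.
by case: (unliftP ord0 k) => [j ->|->].
Qed.

End Aff.

Section Mx.
Variables (n : nat) (T U : finType).
Local Notation X := (('I_n + T) + U)%type.

Definition e_of (v : 'rV[R]_n) (z : 'rV[R]_#|T|) (w : 'rV[R]_#|U|) : X -> R :=
  fun x => match x with
  | inl (inl j) => v 0 j | inl (inr t) => z 0 (enum_rank t)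
  | inr u => w 0 (enum_rank u) end.

Lemma sum_e_of v z w (c : X -> R) :
  \sum_x e_of v z w x * c x =
    \sum_j v 0 j * c (inl (inl j)) + \sum_j z 0 j * c (inl (inr (enum_val j)))
  + \sum_j w 0 j * c (inr (enum_val j)).
Proof.
rewrite big_sumType big_sumType /=.
congr (_ + _ + _).
  rewrite (big_enum_val (fun t => z 0 (enum_rank t) * c (inl (inr t)))) /=.
  by apply: eq_bigr => j _; rewrite enum_valK.
rewrite (big_enum_val (fun t => w 0 (enum_rank t) * c (inr t))) /=.
by apply: eq_bigr => j _; rewrite enum_valK.
Qed.

Lemma polyh_mx Q : polyh Q -> exists m (A : 'M[R]_(m, n)) (B : 'M[R]_(m, #|T|))
  (C : 'M[R]_(m, #|U|)) (b : 'cV[R]_m), forall v z w,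
  Q (e_of v z w) <-> forall i, (A *m v^T + B *m z^T + C *m w^T) i 0 <= b i 0.
Proof.
move=> [m [h [ha hh]]].
pose c i (x : X) := h i (fun y => (x == y)%:R) - h i (fun _ => 0).
exists m, (\matrix_(i, j) c i (inl (inl j))),
  (\matrix_(i, j) c i (inl (inr (enum_val j)))),
  (\matrix_(i, j) c i (inr (enum_val j))), (\col_i (- h i (fun _ => 0))).
move=> v z w; rewrite hh.
suff K : forall i, h i (e_of v z w) <= 0 <->
   ((\matrix_(i, j) c i (inl (inl j))) *m v^T +
    (\matrix_(i, j) c i (inl (inr (enum_val j)))) *m z^T +
    (\matrix_(i, j) c i (inr (enum_val j))) *m w^T) i 0
   <= (\col_i (- h i (fun _ => 0))) i 0.
  by split=> H i; apply/K.
move=> i.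
rewrite (aff_expand (ha i)) sum_e_of !mxE.
have E2 : forall p (f : 'I_m -> 'I_p -> R) (y : 'rV[R]_p),
    \sum_j (\matrix_(i0, j0) f i0 j0) i j * y^T j 0 = \sum_j y 0 j * f i j.
  by move=> p f y; apply: eq_bigr => j _; rewrite !mxE mulrC.
rewrite !E2.
split=> H; lra.
Qed.

Lemma e_of_eta (e : X -> R) (v : 'rV[R]_n) : (forall j, e (inl (inl j)) = v 0 j) ->
  e = e_of v (\row_j e (inl (inr (enum_val j)))) (\row_j e (inr (enum_val j))).
Proof.
move=> hv; apply: functional_extensionality => -[[j|t]|u] /=.
- by rewrite hv.
- by rewrite mxE enum_rankK.
- by rewrite mxE enum_rankK.
Qed.

Lemma milp_gen (S : 'rV[R]_n -> Prop) (Q : (X -> R) -> Prop) : polyh Q ->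
  (forall v, S v <-> exists e : X -> R, (forall j, e (inl (inl j)) = v 0 j) /\
     (forall u, e (inr u) = 0 \/ e (inr u) = 1) /\ Q e) ->
  MILP_repr S.
Proof.
move=> /polyh_mx [m [A [B [C [b hQ]]]]] hS.
exists #|T|, #|U|, m, A, B, C, b => v; rewrite hS; split.
  move=> [e [hv [hb he]]].
  exists (\row_j e (inl (inr (enum_val j)))), (\row_j e (inr (enum_val j))).
  split; first by move=> j; rewrite mxE; apply: hb.
  by apply/hQ; rewrite -e_of_eta.
move=> [z [w [hw hi]]]; exists (e_of v z w); split=> //; split; last exact/hQ.
by move=> u /=; apply: hw.
Qed.

End Mx.

Lemma lp_gen n (T : finType) (S : 'rV[R]_n -> Prop)
  (Q : ((('I_n + T) + void)%type -> R) -> Prop) : polyh Q ->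
  (forall v, S v <-> exists e : (('I_n + T) + void)%type -> R,
     (forall j, e (inl (inl j)) = v 0 j) /\ Q e) ->
  LP_repr S.
Proof.
move=> /polyh_mx [m [A [B [C [b hQ]]]]] hS.
have C0 : forall w : 'rV[R]_#|{: void}|, C *m w^T = 0.
  move=> w; apply/matrixP => i j; rewrite !mxE big1 // => k _.
  by case: (enum_val k).
exists #|T|, m, A, B, b => v; rewrite hS; split.
  move=> [e [hv he]].
  exists (\row_j e (inl (inr (enum_val j)))).
  have := (hQ v (\row_j e (inl (inr (enum_val j)))) (\row_j e (inr (enum_val j)))).1.
  by rewrite -e_of_eta // C0 addr0; apply.
move=> [z hi]; exists (e_of v z 0); split=> //.
by apply/hQ => i; rewrite C0 addr0.
Qed.

End Gen.

Ltac solve_aff := repeat first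
  [ apply: aff_cst | apply: aff_var | apply: aff_add | apply: aff_opp
  | apply: aff_mull | apply: aff_mulr | (apply: aff_sum; move=> ?) ].

Ltac solve_poly := repeat first
  [ (apply: polyh_forall; move=> ?) | apply: polyh_and
  | apply: polyh_imp | apply: polyh_true | (apply: polyh_le; solve_aff) ].

Section Prob.
Variable R : realType.
Variables (K : nat) (dt ylo yhi xlo xhi etac etad y0 gamma : R).

Definition core (x0 xu xd al be ll lu : 'I_K -> R) (LL LU : 'I_K -> 'I_K -> R) : Prop :=
  (forall k, 0 <= xu k /\ 0 <= xd k /\ 0 <= ll k /\ 0 <= lu k) /\
  (forall k l : 'I_K, (l <= k)%N -> 0 <= LL k l) /\
  (forall k, x0 k + xu k <= xhi /\ xlo <= x0 k - xd k) /\
  (forall k : 'I_K,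
     ylo <= y0 - gamma * ll k - dt * \sum_(l < K | (l <= k)%N) (al l + LL k l)) /\
  (forall k, etac * x0 k <= al k /\ x0 k / etad <= al k /\
             etac * (x0 k + xu k) <= be k /\ (x0 k + xu k) / etad <= be k) /\
  (forall k l : 'I_K, (l <= k)%N -> 0 <= LL k l + ll k + al l - be l) /\
  (forall k : 'I_K,
     y0 + gamma * lu k + dt * \sum_(l < K | (l <= k)%N) LU k l <= yhi) /\
  (forall k, - (etac * x0 k) <= LU k k /\
             etac * (xd k - x0 k) - lu k <= LU k k /\ 0 <= LU k k).

Definition gcon (x0 xd w1 w2 : 'I_K -> R) : Prop :=
  forall k : 'I_K, (k.+1 < K)%N ->
     (1 - w1 k) * xlo <= x0 k - xd k /\ x0 k - xd k <= w1 k * xhi /\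
     w2 k * xlo <= x0 k /\ x0 k <= (1 - w2 k) * xhi.

Definition hcon (x0 xd lu : 'I_K -> R) (LU : 'I_K -> 'I_K -> R) (w1 w2 : 'I_K -> R) : Prop :=
  forall k l : 'I_K, (l < k)%N ->
     (xd l - x0 l) / etad - lu k + (1 - w1 l) * deta etac etad * xlo <= LU k l /\
     - (x0 l / etad) + w2 l * deta etac etad * xlo <= LU k l /\
     etac * (xd l - x0 l) - lu k - w1 l * deta etac etad * xhi <= LU k l /\
     - (etac * x0 l) - (1 - w2 l) * deta etac etad * xhi <= LU k l.

Definition icon (x0 xd lu : 'I_K -> R) (LU : 'I_K -> 'I_K -> R) (w1 w2 : 'I_K -> R) : Prop :=
  forall k l : 'I_K, (l < k)%N ->
     w2 l * (xlo * (xhi - xlo) / etad) - w1 l * (xhi ^+ 2 / (4 * etad))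
       <= LU k l * xd l + lu k * x0 l.

Lemma feasP_iff x0 xu xd al be ll lu LL LU u1 u2 :
  feasP dt ylo yhi xlo xhi etac etad y0 gamma x0 xu xd al be ll lu LL LU u1 u2 <->
  core x0 xu xd al be ll lu LL LU /\
  gcon x0 xd (fun k => (u1 k)%:R) (fun k => (u2 k)%:R) /\
  hcon x0 xd lu LU (fun k => (u1 k)%:R) (fun k => (u2 k)%:R) /\
  icon x0 xd lu LU (fun k => (u1 k)%:R) (fun k => (u2 k)%:R).
Proof. rewrite /feasP /core /gcon /hcon /icon /=; tauto. Qed.

Definition T1 := ((('I_K + 'I_K) + ('I_K + 'I_K)) + (('I_K * 'I_K) + ('I_K * 'I_K)))%type.

Section Acc.
Variable U : finType.
Local Notation X := ((('I_(K + K + K) + T1) + U)%type).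
Variable e : X -> R.
Definition x0a k := e (inl (inl (lshift K (lshift K k)))).
Definition xua k := e (inl (inl (lshift K (rshift K k)))).
Definition xda k := e (inl (inl (rshift (K + K) k))).
Definition ala k := e (inl (inr (inl (inl (inl k))))).
Definition bea k := e (inl (inr (inl (inl (inr k))))).
Definition lla k := e (inl (inr (inl (inr (inl k))))).
Definition lua k := e (inl (inr (inl (inr (inr k))))).
Definition LLa k l := e (inl (inr (inr (inl (k, l))))).
Definition LUa k l := e (inl (inr (inr (inr (k, l))))).
End Acc.

Definition mkenv (U : finType) (v : 'rV[R]_(K + K + K)) (al be ll lu : 'I_K -> R)
  (LL LU : 'I_K -> 'I_K -> R) (wu : U -> R) : (('I_(K + K + K) + T1) + U)%type -> R :=
  fun x => match x with
  | inl (inl j) => v 0 j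
  | inl (inr t) => match t with
    | inl (inl (inl k)) => al k | inl (inl (inr k)) => be k
    | inl (inr (inl k)) => ll k | inl (inr (inr k)) => lu k
    | inr (inl p) => LL p.1 p.2 | inr (inr p) => LU p.1 p.2 end
  | inr u => wu u end.

Definition QM (e : ((('I_(K + K + K) + T1) + ('I_K + 'I_K))%type) -> R) : Prop :=
  core (x0a e) (xua e) (xda e) (ala e) (bea e) (lla e) (lua e) (LLa e) (LUa e) /\
  gcon (x0a e) (xda e) (fun k => e (inr (inl k))) (fun k => e (inr (inr k))) /\
  hcon (x0a e) (xda e) (lua e) (LUa e) (fun k => e (inr (inl k))) (fun k => e (inr (inr k))) /\
  (forall k, xda e k <= 0).

Lemma polyh_QM : polyh QM.
Proof.
rewrite /QM /core /gcon /hcon /x0a /xua /xda /ala /bea /lla /lua /LLa /LUa.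
solve_poly.
Qed.


Lemma row3_eta (v : 'rV[R]_(K + K + K)) :
  v = row_mx (row_mx (\row_k v 0 (lshift K (lshift K k)))
                     (\row_k v 0 (lshift K (rshift K k))))
             (\row_k v 0 (rshift (K + K) k)).
Proof.
rewrite -[v in LHS](hsubmxK v) -[lsubmx v](hsubmxK (lsubmx v)).
by congr (row_mx (row_mx _ _) _); apply/rowP => k; rewrite !mxE.
Qed.

Lemma bridge (U : finType) extra (Q : ((('I_(K + K + K) + T1) + U)%type -> R) -> Prop)
  (B : (U -> R) -> Prop) :
  (forall x0 xu xd al be ll lu LL LU u1 u2, extra x0 xu xd ->
     feasP dt ylo yhi xlo xhi etac etad y0 gamma x0 xu xd al be ll lu LL LU u1 u2 ->
     exists wu, B wu /\ forall v,
       x0a (mkenv v al be ll lu LL LU wu) = x0 ->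
       xua (mkenv v al be ll lu LL LU wu) = xu ->
       xda (mkenv v al be ll lu LL LU wu) = xd ->
       Q (mkenv v al be ll lu LL LU wu)) ->
  (forall e, B (fun u => e (inr u)) -> Q e ->
     extra (x0a e) (xua e) (xda e) /\
     exists al be ll lu LL LU u1 u2,
       feasP dt ylo yhi xlo xhi etac etad y0 gamma (x0a e) (xua e) (xda e)
         al be ll lu LL LU u1 u2) ->
  forall v, Pset dt ylo yhi xlo xhi etac etad y0 gamma extra v <->
    exists e, (forall j, e (inl (inl j)) = v 0 j) /\ B (fun u => e (inr u)) /\ Q e.
Proof.
move=> hf hb v; split.
  move=> [x0 [xu [xd [hv [hx [al [be [ll [lu [LL [LU [u1 [u2 hF]]]]]]]]]]]]].
  have [wu [hB hQ]] := hf _ _ _ _ _ _ _ _ _ _ _ hx hF.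
  exists (mkenv v al be ll lu LL LU wu); split=> //; split=> //.
  apply: hQ; apply: functional_extensionality => k;
    by rewrite /x0a /xua /xda /= hv ?row_mxEl ?row_mxEr mxE.
move=> [e [hv [hB hQ]]].
have [hx [al [be [ll [lu [LL [LU [u1 [u2 hF]]]]]]]]] := hb e hB hQ.
exists (x0a e), (xua e), (xda e); split; last first.
  by split=> //; exists al, be, ll, lu, LL, LU, u1, u2.
rewrite {1}(row3_eta v).
by congr (row_mx (row_mx _ _) _); apply/rowP => k; rewrite !mxE /x0a /xua /xda hv.
Qed.


Lemma lp_bridge extra (Q : ((('I_(K + K + K) + T1) + void)%type -> R) -> Prop) :
  polyh Q ->
  (forall x0 xu xd al be ll lu LL LU u1 u2, extra x0 xu xd ->
     feasP dt ylo yhi xlo xhi etac etad y0 gamma x0 xu xd al be ll lu LL LU u1 u2 ->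
     forall v,
       x0a (mkenv v al be ll lu LL LU (fun _ : void => 0)) = x0 ->
       xua (mkenv v al be ll lu LL LU (fun _ : void => 0)) = xu ->
       xda (mkenv v al be ll lu LL LU (fun _ : void => 0)) = xd ->
       Q (mkenv v al be ll lu LL LU (fun _ : void => 0))) ->
  (forall e, Q e ->
     extra (x0a e) (xua e) (xda e) /\
     exists al be ll lu LL LU u1 u2,
       feasP dt ylo yhi xlo xhi etac etad y0 gamma (x0a e) (xua e) (xda e)
         al be ll lu LL LU u1 u2) ->
  LP_repr (@Pset R K dt ylo yhi xlo xhi etac etad y0 gamma extra).
Proof.
move=> hQ hf hb; apply: (lp_gen hQ) => v.
rewrite (@bridge void extra Q (fun _ => True)).
- by split=> -[e [hv hq]]; exists e; [case: hq | ].
- move=> x0 xu xd al be ll lu LL LU u1 u2 hx hF.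
  by exists (fun _ => 0); split=> //; apply: hf hF.
- by move=> e _; apply: hb.
Qed.

Lemma no_lt (HK : K = 1%N) (k l : 'I_K) : (l < k)%N -> False.
Proof.
have := ltn_ord k; rewrite {2}HK ltnS leqn0 => /eqP k0.
by rewrite k0.
Qed.

Lemma no_last (HK : K = 1%N) (k : 'I_K) : (k.+1 < K)%N -> False.
Proof. by rewrite {2}HK ltnS leqn0. Qed.

Lemma bin_nat (b : bool) : ((b%:R : R) = 0) \/ ((b%:R : R) = 1).
Proof. by case: b; [right | left]. Qed.

Lemma bin_eq (x : R) : x = 0 \/ x = 1 -> x = ((x == 1)%:R).
Proof.
by case=> ->; rewrite ?eqxx // (_ : ((0 : R) == 1) = false) //; apply/negbTE; rewrite eq_sym oner_neq0.
Qed.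


Definition QL (e : ((('I_(K + K + K) + T1) + void)%type) -> R) : Prop :=
  core (x0a e) (xua e) (xda e) (ala e) (bea e) (lla e) (lua e) (LLa e) (LUa e) /\
  hcon (x0a e) (xda e) (lua e) (LUa e) (fun _ => 0) (fun _ => 1).

Definition QLa (e : ((('I_(K + K + K) + T1) + void)%type) -> R) : Prop :=
  QL e /\ forall k, x0a e k <= 0.

Lemma polyh_QL : polyh QL.
Proof.
rewrite /QL /core /hcon /x0a /xua /xda /ala /bea /lla /lua /LLa /LUa.
solve_poly.
Qed.

Lemma polyh_QLa : polyh QLa.
Proof.
apply: polyh_and; first exact: polyh_QL.
rewrite /x0a; solve_poly.
Qed.


Section Math.
Hypotheses (hdt : 0 < dt) (hxlo : xlo <= 0) (hxhi : 0 <= xhi)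
  (hetac0 : 0 < etac) (hetac1 : etac <= 1)
  (hetad0 : 0 < etad) (hetad1 : etad <= 1) (hg0 : 0 <= gamma).

Ltac pull := have Hdt := hdt; have Hxlo := hxlo; have Hxhi := hxhi;
  have Hetac0 := hetac0; have Hetac1 := hetac1; have Hetad0 := hetad0;
  have Hetad1 := hetad1; have Hg0 := hg0.

Lemma tge1 : 1 <= etad^-1.
Proof. by rewrite invf_ge1. Qed.

Lemma de_ge0 : 0 <= deta etac etad.
Proof. rewrite /deta; have := tge1; pull; lra. Qed.

Lemma ord_lt (k l : 'I_K) : (l < k)%N -> (l.+1 < K)%N.
Proof. move=> hlk; exact: leq_ltn_trans hlk (ltn_ord k). Qed.

Lemma m1 x0 xu xd al be ll lu LL LU (u1 u2 : 'I_K -> bool) :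
  core x0 xu xd al be ll lu LL LU ->
  gcon x0 xd (fun k => (u1 k)%:R) (fun k => (u2 k)%:R) ->
  hcon x0 xd lu LU (fun k => (u1 k)%:R) (fun k => (u2 k)%:R) ->
  (forall k, xd k = 0) ->
  core x0 xu xd al be ll (fun _ => 0) LL LU /\
  hcon x0 xd (fun _ => 0) LU (fun k => (u1 k)%:R) (fun k => (u2 k)%:R) /\
  icon x0 xd (fun _ => 0) LU (fun k => (u1 k)%:R) (fun k => (u2 k)%:R).
Proof.
move=> [hs [hLL [ha [hb [hc [hd [he hf]]]]]]] hg hh hxd; pull.
have de0 := de_ge0.
have dexlo : deta etac etad * xlo <= 0 by rewrite mulrC; apply: mulr_le0_ge0.
have dexhi : 0 <= deta etac etad * xhi by apply: mulr_ge0.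
split.
  split; first by move=> k /=; case: (hs k) => ? [? [? _]]; do !split.
  do 5 (split; first by []).
  split.
    move=> k /=; have := he k; have : 0 <= gamma * lu k.
      by apply: mulr_ge0 => //; case: (hs k) => _ [_ []].
    lra.
  by move=> k /=; case: (hf k) => f1 [f2 f3]; rewrite hxd; split=> //; split=> //; lra.
split.
{ move=> k l hlk /=; have := hg l (ord_lt hlk); have := hh k l hlk.
  rewrite !hxd; case: (u1 l); case: (u2 l) => /=;
  move=> [h1 [h2 [h3 h4]]] [g1 [g2 [g3 g4]]];
  [ (have x00 : x0 l = 0 by lra); rewrite x00 in h1 h2 h3 h4 * | idtac | idtac | (have x00 : x0 l = 0 by lra); rewrite x00 in h1 h2 h3 h4 * ].
  all: split; [|split; [|split]]; lra. }
rewrite /icon => k l hlk /=.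
have P1 : xlo * (xhi - xlo) / etad <= 0.
  by apply: mulr_le0_ge0; [apply: mulr_le0_ge0; lra | rewrite invr_ge0; lra].
have P2 : 0 <= xhi ^+ 2 / (4 * etad).
  by apply: divr_ge0; [apply: sqr_ge0 | apply: mulr_ge0; lra].
rewrite hxd; case: (u1 l); case: (u2 l) => /=; lra.
Qed.









Lemma cap_prop (a M : R) : 0 <= a -> 0 <= M ->
  0 <= (if a <= M then a else M) /\ (if a <= M then a else M) <= a /\
  (if a <= M then a else M) <= M /\
  ((if a <= M then a else M) = a \/ (if a <= M then a else M) = M).
Proof.
move=> ha hM; case: ifP => h; first by do !split => //; left.
have : M < a by rewrite ltNge h.
by move=> hMa; do !split => //; [apply: ltW | right].
Qed.

Lemma m2a_fwd x0 xu xd al be ll lu LL LU (u1 u2 : 'I_K -> bool) :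
  core x0 xu xd al be ll lu LL LU ->
  gcon x0 xd (fun k => (u1 k)%:R) (fun k => (u2 k)%:R) ->
  hcon x0 xd lu LU (fun k => (u1 k)%:R) (fun k => (u2 k)%:R) ->
  (forall k, x0 k <= 0) ->
  hcon x0 xd lu LU (fun _ => 0) (fun _ => 1).
Proof.
move=> [hs [hLL [ha _]]] hg hh hx0; pull.
have de0 := de_ge0.
have dexlo : deta etac etad * xlo <= 0 by rewrite mulrC; apply: mulr_le0_ge0.
have dexhi : 0 <= deta etac etad * xhi by apply: mulr_ge0.
move=> k l hlk /=; have := hg l (ord_lt hlk); have := hh k l hlk.
have := hx0 l; have := hs l; have := hs k; have := ha l.
move=> [a1 a2] [_ [_ [_ luk]]] [_ [xdl _]] x0l.
case: (u1 l); case: (u2 l) => /=;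
move=> [h1 [h2 [h3 h4]]] [g1 [g2 [g3 g4]]];
  [ (have x00 : x0 l = 0 by lra); rewrite x00 in h1 h2 h3 h4 *; (have xd0 : xd l = 0 by lra); rewrite xd0 in h1 h2 h3 h4 * | (have x00 : x0 l = 0 by lra); rewrite x00 in h1 h2 h3 h4 *; (have xd0 : xd l = 0 by lra); rewrite xd0 in h1 h2 h3 h4 * | idtac | (have x00 : x0 l = 0 by lra); rewrite x00 in h1 h2 h3 h4 * ].
all: split; [|split; [|split]]; lra.
Qed.


Lemma m2a x0 xu xd al be ll lu LL LU :
  core x0 xu xd al be ll lu LL LU ->
  hcon x0 xd lu LU (fun _ => 0) (fun _ => 1) ->
  (forall k, x0 k <= 0) ->
  let lu' := fun k => if lu k <= - xlo / etad then lu k else - xlo / etad in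
  core x0 xu xd al be ll lu' LL LU /\
  gcon x0 xd (fun k => (false)%:R) (fun k => (true)%:R) /\
  hcon x0 xd lu' LU (fun k => (false)%:R) (fun k => (true)%:R) /\
  icon x0 xd lu' LU (fun k => (false)%:R) (fun k => (true)%:R).
Proof.
move=> [hs [hLL [ha [hb [hc [hd [he hf]]]]]]] hh hx0 lu'; pull.
have t1 := tge1.
have M0 : 0 <= - xlo / etad by apply: divr_ge0; lra.
have cap : forall k, 0 <= lu' k /\ lu' k <= lu k /\ lu' k <= - xlo / etad /\
    (lu' k = lu k \/ lu' k = - xlo / etad).
  by move=> k; apply: cap_prop => //; case: (hs k) => _ [_ []].
have xdM : forall l, xd l / etad <= - xlo / etad /\ etac * xd l <= - xlo / etad.
  move=> l; have := hx0 l; have := hs l; have := ha l.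
  move=> [a1 a2] [_ [xdl _]] x0l.
  have f1 : (xd l + xlo) * etad^-1 <= 0 by apply: mulr_le0_ge0; lra.
  have f2 : 0 <= (1 - etac) * xd l by apply: mulr_ge0; lra.
  have f3 : 0 <= (etad^-1 - 1) * (- xlo) by apply: mulr_ge0; lra.
  split; lra.
have core' : core x0 xu xd al be ll lu' LL LU.
  split; first by move=> k; case: (hs k) => ? [? [? _]]; case: (cap k) => ? _.
  do 5 (split; first by []).
  split.
    move=> k; have := he k; case: (cap k) => c1 [c2 _].
    have : 0 <= gamma * (lu k - lu' k) by apply: mulr_ge0; lra.
    lra.
  move=> k; case: (hf k) => f1 [f2 f3]; split=> //; split=> //.
  case: (cap k) => _ [_ [_ [->|->]]] //; case: (xdM k) => _; lra.
have hcon' : hcon x0 xd lu' LU (fun k => (false)%:R) (fun k => (true)%:R).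
  move=> k l hlk /=; have [h1 [h2 [h3 h4]]] := hh k l hlk.
  move: h1 h2 h3 h4 => /= h1 h2 h3 h4.
  case: (xdM l) => d1 d2.
  case: (cap k) => _ [_ [_ [->|->]]]; (split; [lra|split; [lra|split; lra]]).
split=> //; split.
  move=> k _ /=; have := hx0 k; have := hs k; have := ha k.
  move=> [a1 a2] [_ [xdl _]] x0l; lra.
split=> //.
move=> k l hlk /=; have [h1 [h2 [h3 h4]]] := hcon' k l hlk.
move: h1 h2 h3 h4 => /= h1 h2 h3 h4.
have := hx0 l; have := hs l; have := ha l.
move=> [a1 a2] [_ [xdl _]] x0l.
case: (cap k) => c1 [c2 [c3 _]].
have ex : etac * x0 l <= 0 by apply: mulr_ge0_le0; lra.
have F1 : 0 <= LU k l * xd l by apply: mulr_ge0; lra.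
have F2 : 0 <= (- xlo / etad - lu' k) * (- x0 l) by apply: mulr_ge0; lra.
have F3 : 0 <= (- xlo / etad) * (x0 l - xlo) by apply: mulr_ge0; lra.
have F4 : xlo * xhi * etad^-1 <= 0.
  by apply: mulr_le0_ge0; [apply: mulr_le0_ge0 | rewrite invr_ge0]; lra.
lra.
Qed.


Lemma m2c_fwd x0 xd lu LU w1 w2 : etac = 1 -> etad = 1 ->
  hcon x0 xd lu LU w1 w2 -> hcon x0 xd lu LU (fun _ => 0) (fun _ => 1).
Proof.
move=> ec ed hh k l hlk; have := hh k l hlk.
have de0 : deta etac etad = 0 by rewrite ec ed /deta invr1 subrr.
rewrite de0 /= !mulr0 !mul0r.
move=> [h1 [h2 [h3 h4]]]; split; [lra|split; [lra|split; lra]].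
Qed.

Lemma m2c x0 xu xd al be ll lu LL LU : etac = 1 -> etad = 1 ->
  core x0 xu xd al be ll lu LL LU ->
  hcon x0 xd lu LU (fun _ => 0) (fun _ => 1) ->
  let lu' := fun k => if lu k <= xhi - xlo then lu k else xhi - xlo in
  let u1 := fun l => (0 <= x0 l - xd l) in
  let u2 := fun l => (x0 l <= 0) in
  core x0 xu xd al be ll lu' LL LU /\
  gcon x0 xd (fun k => (u1 k)%:R) (fun k => (u2 k)%:R) /\
  hcon x0 xd lu' LU (fun k => (u1 k)%:R) (fun k => (u2 k)%:R) /\
  icon x0 xd lu' LU (fun k => (u1 k)%:R) (fun k => (u2 k)%:R).
Proof.
move=> ec ed [hs [hLL [ha [hb [hc [hd [he hf]]]]]]] hh lu' u1 u2; pull.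
have de0 : deta etac etad = 0 by rewrite ec ed /deta invr1 subrr.
have M0 : 0 <= xhi - xlo by lra.
have cap : forall k, 0 <= lu' k /\ lu' k <= lu k /\ lu' k <= xhi - xlo /\
    (lu' k = lu k \/ lu' k = xhi - xlo).
  by move=> k; apply: cap_prop => //; case: (hs k) => _ [_ []].
have xdM : forall l, xd l <= xhi - xlo.
  move=> l; have := hs l; have := ha l; move=> [a1 a2] [xul _]; lra.
have core' : core x0 xu xd al be ll lu' LL LU.
  split; first by move=> k; case: (hs k) => ? [? [? _]]; case: (cap k) => ? _.
  do 5 (split; first by []).
  split.
    move=> k; have := he k; case: (cap k) => c1 [c2 _].
    have : 0 <= gamma * (lu k - lu' k) by apply: mulr_ge0; lra.
    lra.
  move=> k; case: (hf k) => f1 [f2 f3]; split=> //; split=> //.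
  move: f1 f2; rewrite ec !mul1r => f1 f2.
  case: (cap k) => _ [_ [_ [->|->]]] //; have := xdM k; lra.
have hcon' : hcon x0 xd lu' LU (fun k => (u1 k)%:R) (fun k => (u2 k)%:R).
  move=> k l hlk /=; have := hh k l hlk.
  rewrite de0 ec ed /= !mulr0 !mul0r invr1 !mulr1 !mul1r.
  move=> [h1 [h2 [h3 h4]]].
  have := xdM l.
  case: (cap k) => _ [_ [_ [->|->]]] => d1; (split; [lra|split; [lra|split; lra]]).
split=> //; split.
  move=> k _ /=; have := hs k; have := ha k.
  move=> [a1 a2] [xuk [xdl _]].
  rewrite /u1 /u2; case: (lerP 0 (x0 k - xd k)) => s0; case: (lerP (x0 k) 0) => b0 /=;
  (split; [lra|split; [lra|split; lra]]).
split=> //.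
move=> k l hlk /=; have := hcon' k l hlk.
rewrite de0 ed /= ?mulr0 ?mul0r invr1 ?mulr1 ?mul1r => -[h1 [h2 [h3 h4]]].
have := hs l; have := ha l.
move=> [a1 a2] [xul [xdl _]].
case: (cap k) => c1 [c2 [c3 _]].
have X4 : 0 <= xhi ^+ 2 / 4 by apply: divr_ge0 => //; apply: sqr_ge0.
rewrite /u1 /u2.
case: (lerP (x0 l) 0) => b0 /=.
  have F1 : 0 <= LU k l * xd l by apply: mulr_ge0; lra.
  have F2 : 0 <= (xhi - xlo - lu' k) * (- x0 l) by apply: mulr_ge0; lra.
  have F3 : 0 <= (xhi - xlo) * (x0 l - xlo) by apply: mulr_ge0; lra.
  by case: (lerP 0 (x0 l - xd l)) => s0 /=; lra.
case: (lerP (xd l) (lu' k)) => la.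
  have F1 : 0 <= (LU k l + x0 l) * xd l by apply: mulr_ge0; lra.
  have F2 : 0 <= (lu' k - xd l) * x0 l by apply: mulr_ge0; lra.
  by case: (lerP 0 (x0 l - xd l)) => s0 /=; lra.
have F1 : 0 <= (LU k l - (xd l - x0 l - lu' k)) * xd l by apply: mulr_ge0; lra.
case: (lerP 0 (x0 l - xd l)) => s0 /=.
  have F2 : 0 <= lu' k * (x0 l - xd l) by apply: mulr_ge0; lra.
  have F3 : 0 <= (xd l - x0 l / 2) ^+ 2 by apply: sqr_ge0.
  have F4 : 0 <= (xhi - x0 l) * (xhi + x0 l) by apply: mulr_ge0; lra.
  lra.
have F2 : 0 <= (xd l - lu' k) * (xd l - x0 l) by apply: mulr_ge0; lra.
lra.
Qed.










Lemma part1 : MILP_repr (@Pset R K dt ylo yhi xlo xhi etac etad y0 gamma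
               (fun _ _ xd => forall k, xd k = 0)).
Proof.
apply: (milp_gen polyh_QM) => v.
apply: (bridge (B := fun wu => forall u, wu u = 0 \/ wu u = 1)).
  move=> x0 xu xd al be ll lu LL LU u1 u2 hx /feasP_iff [hc [hg [hh _]]].
  exists (fun u => match u with inl k => (u1 k)%:R | inr k => (u2 k)%:R end); split.
    by case=> k; apply: bin_nat.
  move=> v' E0 E1 E2; rewrite /QM E0 E1 E2; split=> //; split=> //; split=> //.
  by move=> k; rewrite hx.
move=> e hb [hc [hg [hh hxd0]]].
have xd0 : forall k, xda e k = 0.
  move=> k; apply/eqP; rewrite eq_le hxd0 /=; case: hc => hs _; by case: (hs k) => _ [].
pose u1 k := e (inr (inl k)) == 1; pose u2 k := e (inr (inr k)) == 1.
have W1 : (fun k => e (inr (inl k))) = (fun k => (u1 k)%:R).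
  by apply: functional_extensionality => k; rewrite /u1 -bin_eq //; apply: hb.
have W2 : (fun k => e (inr (inr k))) = (fun k => (u2 k)%:R).
  by apply: functional_extensionality => k; rewrite /u2 -bin_eq //; apply: hb.
rewrite W1 W2 in hg hh.
have [c' [h' i']] := m1 hc hg hh xd0.
split=> //; exists (ala e), (bea e), (lla e), (fun _ => 0), (LLa e), (LUa e), u1, u2.
by apply/feasP_iff.
Qed.

Lemma part2a : LP_repr (@Pset R K dt ylo yhi xlo xhi etac etad y0 gamma
               (fun x0 _ _ => forall k, x0 k <= 0)).
Proof.
apply: (lp_bridge polyh_QLa).
  move=> x0 xu xd al be ll lu LL LU u1 u2 hx /feasP_iff [hc [hg [hh _]]] v E0 E1 E2.
  rewrite /QLa /QL E0 E1 E2; split=> //; split=> //.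
  exact: m2a_fwd hc hg hh hx.
move=> e [[hc hh] hx]; split=> //.
have /= H := m2a hc hh hx.
eexists _, _, _, _, _, _, (fun _ => false), (fun _ => true); apply/feasP_iff.
exact: H.
Qed.

Lemma part2b : K = 1%N ->
  LP_repr (@Pset R K dt ylo yhi xlo xhi etac etad y0 gamma (fun _ _ _ => True)).
Proof.
move=> HK; apply: (lp_bridge polyh_QL).
  move=> x0 xu xd al be ll lu LL LU u1 u2 _ /feasP_iff [hc _] v E0 E1 E2.
  rewrite /QL E0 E1 E2; split=> // k l hlk; case: (no_lt HK hlk).
move=> e [hc hh]; split=> //.
exists (ala e), (bea e), (lla e), (lua e), (LLa e), (LUa e), (fun _ => false), (fun _ => false).
apply/feasP_iff; split=> //; split; first by move=> k hk; case: (no_last HK hk).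
by split=> k l hlk; case: (no_lt HK hlk).
Qed.

Lemma part2c : etac = 1 -> etad = 1 ->
  LP_repr (@Pset R K dt ylo yhi xlo xhi etac etad y0 gamma (fun _ _ _ => True)).
Proof.
move=> ec ed; apply: (lp_bridge polyh_QL).
  move=> x0 xu xd al be ll lu LL LU u1 u2 _ /feasP_iff [hc [_ [hh _]]] v E0 E1 E2.
  rewrite /QL E0 E1 E2; split=> //.
  exact: m2c_fwd ec ed hh.
move=> e [hc hh]; split=> //.
have /= H := m2c ec ed hc hh.
eexists _, _, _, _, _, _, _, _; apply/feasP_iff.
exact: H.
Qed.

End Math.

End Prob.

Theorem proposition8 (R : realType) (K : nat)
  (dt ylo yhi xlo xhi etac etad y0 gamma : R)
  (hK : (0 < K)%N) (hdt : 0 < dt)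
  (hylo : 0 <= ylo) (hy : ylo <= yhi) (hxlo : xlo <= 0) (hxhi : 0 <= xhi)
  (hetac0 : 0 < etac) (hetac1 : etac <= 1)
  (hetad0 : 0 < etad) (hetad1 : etad <= 1)
  (hy0 : 0 <= y0) (hg0 : 0 <= gamma) (hg1 : gamma <= K%:R * dt) :
  (* (1) with x_down = 0 imposed: mixed-integer linear *)
  MILP_repr (@Pset R K dt ylo yhi xlo xhi etac etad y0 gamma
               (fun _ _ xd => forall k, xd k = 0)) /\
  (* (2) linear program in continuous variables only *)
  LP_repr (@Pset R K dt ylo yhi xlo xhi etac etad y0 gamma
             (fun x0 _ _ => forall k, x0 k <= 0)) /\
  (K = 1%N ->
   LP_repr (@Pset R K dt ylo yhi xlo xhi etac etad y0 gamma (fun _ _ _ => True))) /\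
  (etac = 1 -> etad = 1 ->
   LP_repr (@Pset R K dt ylo yhi xlo xhi etac etad y0 gamma (fun _ _ _ => True))).
Proof.
split; first by apply: part1.
split; first by apply: part2a.
split; first by apply: part2b.
by apply: part2c.
Qed.
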